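(* Let $a,b\ge1$, $P=[a]\times[b]$, $n=a+b$. For every $f\in(\mathbb R^+)^P$ and every $1\le k\le n-1$, $$Q(\tau^*_k f)=\sigma_k\,Q(f),$$ i.e. applying the birational toggles of the $k$-th file swaps the $k$-th and $(k+1)$-st entries of the quotient sequence and leaves the others unchanged.
   Context: $[a]\times[b]=\{(i,j)\in\mathbb Z^2:1\le i\le a,\ 1\le j\le b\}$ with the product order. Let $\widehat P=P\cup\{\hat0,\hat1\}$ with $\hat0<x<\hat1$ for all $x\in P$; write $y\lessdot x$ for covering relations; $x^+=\{y\in\widehat P:y\gtrdot x\}$, $x^-=\{y\in\widehat P:y\lessdot x\}$. Each $f:P\to\mathbb R^+$ is extended by $\hat f(\hat0)=\hat f(\hat1)=1$. Parallel sum: $s_1\parallel\cdots\parallel s_m=(1/s_1+\cdots+1/s_m)^{-1}$. The birational toggle $\tau_x$ changes only the value at $x$: $(\tau_xf)(x)=\frac{1}{f(x)}\bigl(\sum_{y\in x^-}\hat f(y)\bigr)\bigl(\|_{y\in x^+}\hat f(y)\bigr)$. The $k$-th file ($1\le k\le n-1$) is $\{(i,j)\in P:j-i+a=k\}$; $\tau^*_k$ is the composition of the (commuting) toggles $\tau_x$ over $x$ in file $k$. For $f\in(\mathbb R^+)^P$ let $p_k=\prod_{x\in\text{file }k}f(x)$ for $1\le k\le n-1$, $p_0=p_n=1$, $q_k=p_k/p_{k-1}$ for $1\le k\le n$; the quotient sequence is $Q(f)=(q_1,\dots,q_n)$. For $w=(w_1,\dots,w_n)$, $\sigma_k(w)=(w_1,\dots,w_{k-1},w_{k+1},w_k,w_{k+2},\dots,w_n)$.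 *)

(* Defs.v *)
From HB Require Import structures.
From mathcomp Require Import all_boot all_order all_algebra.
Set Implicit Arguments. Unset Strict Implicit. Unset Printing Implicit Defensive.
Import Order.TTheory GRing.Theory Num.Theory.
Local Open Scope ring_scope.

Section Toggle.
Variables (R : realFieldType) (a b : nat).

(* The poset P = [a] x [b]: the element (i,j) (1-based) is represented by
   the pair of ordinals (i-1, j-1) : 'I_a * 'I_b. *)
Definition elt := ('I_a * 'I_b)%type.

Definition leP (x y : elt) : bool := ((x.1 <= y.1)%N && (x.2 <= y.2)%N).

(* hat P = P u {0hat, 1hat}:  inl false = 0hat, inl true = 1hat, inr x = x. *)
Definition Phat := (bool + elt)%type.
Definition bot : Phat := inl false.
Definition top : Phat := inl true.

Definition leh (x y : Phat) : bool :=
  match x, y with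
  | inl false, _ => true
  | _, inl true => true
  | inr p, inr q => leP p q
  | _, _ => false
  end.
Definition lth (x y : Phat) : bool := (x != y) && leh x y.

Definition covh (y x : Phat) : bool :=
  lth y x && [forall z : Phat, ~~ (lth y z && lth z x)].

Definition fhat (f : elt -> R) (x : Phat) : R :=
  match x with inl _ => 1 | inr p => f p end.

Definition toggle (x : elt) (f : elt -> R) : elt -> R :=
  fun y => if y == x then
    (f x)^-1 * (\sum_(z : Phat | covh z (inr x)) fhat f z)
             * (\sum_(z : Phat | covh (inr x) z) (fhat f z)^-1)^-1
  else f y.

Definition infile (k : nat) (x : elt) : bool := (x.2 + a - x.1 == k)%N.

Definition tau_file (k : nat) (f : elt -> R) : elt -> R :=
  foldr toggle f (enum [pred x | infile k x]).

Definition n := (a + b)%N.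

Definition pk (f : elt -> R) (k : nat) : R :=
  if (0 < k < n)%N then \prod_(x : elt | infile k x) f x else 1.

Definition qk (f : elt -> R) (k : nat) : R := pk f k / pk f k.-1.

Definition Qseq (f : elt -> R) : seq R := [seq qk f k | k <- iota 1 n].

End Toggle.

(* sigma_k swaps the k-th and (k+1)-st entries (1-based) *)
Definition sigma {T : Type} (x0 : T) (k : nat) (w : seq T) : seq T :=
  take k.-1 w ++ [:: nth x0 w k; nth x0 w k.-1] ++ drop k.+1 w.

(* Main.v *)
Require Import Defs.
From HB Require Import structures.
From mathcomp Require Import all_boot all_order all_algebra zify ring lra.
Import Order.TTheory GRing.Theory Num.Theory.
Set Implicit Arguments. Unset Strict Implicit. Unset Printing Implicit Defensive.
Local Open Scope ring_scope.

Lemma elt_eqE a b (q r : elt a b) :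
  (q == r) = ((q.1 == r.1 :> nat) && (q.2 == r.2 :> nat)).
Proof. by case: q r => [q1 q2] [r1 r2]. Qed.

Lemma inr_eqE a b (q r : elt a b) : (inr q == inr r :> Phat a b) = (q == r).
Proof. by []. Qed.

Definition ecov a b (q p : elt a b) : bool :=
  ((((q.1 : nat).+1 == p.1) && (q.2 == p.2 :> nat)) || ((q.1 == p.1 :> nat) && ((q.2 : nat).+1 == p.2)))%N.

Lemma covh_inr a b (q p : elt a b) : covh (inr q) (inr p) = ecov q p.
Proof.
rewrite /covh /lth /=.
case: q p => [q1 q2] [p1 p2]; rewrite /Defs.leP /ecov /= inr_eqE elt_eqE /=.
have hq1 := ltn_ord q1; have hq2 := ltn_ord q2.
have hp1 := ltn_ord p1; have hp2 := ltn_ord p2.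
apply/andP/idP.
- case=> [hlt /forallP hall]; apply/negPn/negP => hn.
  case: (ltnP q1 p1) => h1; case: (ltnP q2 p2) => h2.
  + have := hall (inr (p1, q2)); rewrite /= !inr_eqE !elt_eqE /Defs.leP /=.
    rewrite /Defs.leP /=; move: hlt hn; lia.
  + have hb : (q1.+1 < a)%N by lia.
    have := hall (inr (Ordinal hb, q2)); rewrite /= !inr_eqE !elt_eqE /Defs.leP /=.
    move: hlt hn; lia.
  + have hb : (q2.+1 < b)%N by lia.
    have := hall (inr (q1, Ordinal hb)); rewrite /= !inr_eqE !elt_eqE /Defs.leP /=.
    move: hlt hn; lia.
  + move: hlt hn; lia.
- move=> hc; split.
  + move: hc; lia.
  + apply/forallP => -[[]|[r1 r2]] /=; rewrite ?andbF //.
    rewrite !inr_eqE !elt_eqE /Defs.leP /=.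
    move: hc; lia.
Qed.

Lemma covh_bot_inr a b (p : elt a b) :
  covh (bot a b) (inr p) = ((p.1 == 0 :> nat) && (p.2 == 0 :> nat)).
Proof.
rewrite /covh /lth /=.
case: p => [p1 p2] /=.
have hp1 := ltn_ord p1; have hp2 := ltn_ord p2.
apply/forallP/idP.
- move=> hall; apply/negPn/negP => hn.
  have ha : (0 < a)%N by lia.
  have hb : (0 < b)%N by lia.
  have := hall (inr (Ordinal ha, Ordinal hb)); rewrite /= !inr_eqE !elt_eqE /Defs.leP /=.
  move: hn; lia.
- move=> hc -[[]|[r1 r2]] //=.
  rewrite !inr_eqE !elt_eqE /Defs.leP /=.
  move: hc; lia.
Qed.

Lemma covh_top_inr a b (p : elt a b) : covh (top a b) (inr p) = false.
Proof. by rewrite /covh /lth /= ?andbF. Qed.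

Lemma covh_inr_bot a b (p : elt a b) : covh (inr p) (bot a b) = false.
Proof. by rewrite /covh /lth /= ?andbF. Qed.

Lemma covh_inr_top a b (p : elt a b) :
  covh (inr p) (top a b) = (((p.1 : nat).+1 == a) && ((p.2 : nat).+1 == b))%N.
Proof.
rewrite /covh /lth /=.
case: p => [p1 p2] /=.
have hp1 := ltn_ord p1; have hp2 := ltn_ord p2.
apply/forallP/idP.
- move=> hall; apply/negPn/negP => hn.
  have ha : (a.-1 < a)%N by lia.
  have hb : (b.-1 < b)%N by lia.
  have := hall (inr (Ordinal ha, Ordinal hb)); rewrite /= !inr_eqE !elt_eqE /Defs.leP /=.
  move: hn; lia.
- move=> hc -[[]|[r1 r2]] //=; rewrite ?andbF //.
  rewrite !inr_eqE !elt_eqE /Defs.leP /=.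
  rewrite andbT; move: hc (ltn_ord r1) (ltn_ord r2); lia.
Qed.

Definition fn (R : realFieldType) a b (f : 'I_a * 'I_b -> R) (i j : nat) : R :=
  match (insub i : option 'I_a), (insub j : option 'I_b) with
  | Some i', Some j' => f (i', j') | _, _ => 0 end.

Lemma fnE (R : realFieldType) a b (f : 'I_a * 'I_b -> R) (i : 'I_a) (j : 'I_b) :
  fn f i j = f (i, j).
Proof. by rewrite /fn !valK. Qed.

Lemma fn0 (R : realFieldType) a b (f : 'I_a * 'I_b -> R) i j :
  ~~ ((i < a) && (j < b))%N -> fn f i j = 0.
Proof.
rewrite negb_and /fn => /orP[h|h].
  by rewrite insubN.
by case: (insub i) => // ?; rewrite insubN.
Qed.

Lemma fn_gt0 (R : realFieldType) a b (f : 'I_a * 'I_b -> R) (hf : forall x, 0 < f x) i j :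
  (i < a)%N -> (j < b)%N -> 0 < fn f i j.
Proof. by move=> hi hj; have := fnE f (Ordinal hi) (Ordinal hj) => /= ->. Qed.

Lemma sum_ord_eq (R : realFieldType) n (G : nat -> R) c :
  \sum_(j < n) (if (j == c :> nat) then G j else 0) = if (c < n)%N then G c else 0.
Proof.
elim: n => [|n IH]; first by rewrite big_ord0.
rewrite big_ord_recr /= IH.
case: (ltngtP c n) => h.
- have -> : (c < n.+1)%N by lia.
  by rewrite addr0.
- have -> : (c < n.+1)%N = false by lia.
  by rewrite addr0.
- by rewrite h ltnSn add0r.
Qed.

Lemma sum2_eq (R : realFieldType) a b (G : nat -> nat -> R) ci cj :
  \sum_(i < a) \sum_(j < b) (if (i == ci :> nat) && (j == cj :> nat) then G i j else 0)
  = if (ci < a)%N && (cj < b)%N then G ci cj else 0.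
Proof.
rewrite (eq_bigr (fun i : 'I_a => if (i == ci :> nat) then (if (cj < b)%N then G i cj else 0) else 0)).
  by rewrite (@sum_ord_eq _ a (fun i => if (cj < b)%N then G i cj else 0)); case: (ci < a)%N.
move=> i _; case: eqP => _ /=.
  exact: (@sum_ord_eq _ b (G i)).
by rewrite big1.
Qed.

Lemma sum2_guard (R : realFieldType) a b (c : bool) (G : nat -> nat -> R) ci cj :
  \sum_(i < a) \sum_(j < b) (if c then (if (i == ci :> nat) && (j == cj :> nat) then G i j else 0) else 0)
  = if c then (if (ci < a)%N && (cj < b)%N then G ci cj else 0) else 0.
Proof.
case: c; first exact: sum2_eq.
by rewrite big1 // => i _; rewrite big1.
Qed.

Lemma ecov_if (R : realFieldType) (G : nat -> nat -> R) (i j p1 p2 : nat) :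
  (if ((i.+1 == p1) && (j == p2)) || ((i == p1) && (j.+1 == p2)) then G i j else 0) =
  (if (0 < p1)%N then (if (i == p1.-1) && (j == p2) then G i j else 0) else 0)
  + (if (0 < p2)%N then (if (i == p1) && (j == p2.-1) then G i j else 0) else 0).
Proof.
by do ![case: ifP => ?]; rewrite ?addr0 ?add0r //; exfalso; lia.
Qed.

Definition Dn (R : realFieldType) a b (f : 'I_a * 'I_b -> R) (i j : nat) : R :=
  (if (i == 0)%N && (j == 0)%N then 1 else 0) + (if (0 < i)%N then fn f i.-1 j else 0)
  + (if (0 < j)%N then fn f i j.-1 else 0).

Lemma Dsum (R : realFieldType) a b (f : 'I_a * 'I_b -> R) (p : elt a b) :
  \sum_(z : Phat a b | covh z (inr p)) fhat f z = Dn f p.1 p.2.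
Proof.
rewrite big_mkcond big_sumType big_bool /= (covh_bot_inr p) add0r.
under eq_bigr => q _ do rewrite covh_inr.
have -> : \sum_(q : elt a b) (if ecov q p then f q else 0) =
  \sum_(i < a) \sum_(j < b) (if ecov (i, j) p then f (i, j) else 0).
  by rewrite pair_bigA; apply: eq_bigr => -[].
case: p => [p1 p2] /=.
under eq_bigr => i _ do under eq_bigr => j _ do rewrite -fnE /ecov /= ecov_if.
under eq_bigr => i _ do rewrite big_split /=.
rewrite big_split /= !sum2_guard /Dn.
have hp1 := ltn_ord p1; have hp2 := ltn_ord p2.
have -> : (p1.-1 < a)%N by lia.
rewrite hp1 hp2 /=.
have -> : (p2.-1 < b)%N by lia.
by rewrite addrA.
Qed.

Lemma ecov_if2 (R : realFieldType) (G : nat -> nat -> R) (i j p1 p2 : nat) :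
  (if ((p1.+1 == i) && (p2 == j)) || ((p1 == i) && (p2.+1 == j)) then G i j else 0) =
  (if true then (if (i == p1.+1) && (j == p2) then G i j else 0) else 0)
  + (if true then (if (i == p1) && (j == p2.+1) then G i j else 0) else 0).
Proof.
by do ![case: ifP => ?]; rewrite ?addr0 ?add0r //; exfalso; lia.
Qed.

Definition Un (R : realFieldType) a b (f : 'I_a * 'I_b -> R) (i j : nat) : R :=
  (if (i.+1 == a)%N && (j.+1 == b)%N then 1 else 0) + (fn f i.+1 j)^-1
  + (fn f i j.+1)^-1.

Lemma fn_inv_guard (R : realFieldType) a b (f : 'I_a * 'I_b -> R) i j :
  (if (i < a)%N && (j < b)%N then (fn f i j)^-1 else 0) = (fn f i j)^-1.
Proof. by case: ifP => // h; rewrite fn0 ?h // invr0. Qed.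

Lemma Usum (R : realFieldType) a b (f : 'I_a * 'I_b -> R) (p : elt a b) :
  \sum_(z : Phat a b | covh (inr p) z) (fhat f z)^-1 = Un f p.1 p.2.
Proof.
rewrite big_mkcond big_sumType big_bool /= (covh_inr_top p) invr1 addr0.
under eq_bigr => q _ do rewrite covh_inr.
have -> : \sum_(q : elt a b) (if ecov p q then (f q)^-1 else 0) =
  \sum_(i < a) \sum_(j < b) (if ecov p (i, j) then (f (i, j))^-1 else 0).
  by rewrite pair_bigA; apply: eq_bigr => -[].
case: p => [p1 p2] /=.
under eq_bigr => i _ do under eq_bigr => j _ do
  rewrite -fnE /ecov /= (ecov_if2 (fun i j => (fn f i j)^-1)).
under eq_bigr => i _ do rewrite big_split /=.
rewrite big_split /= (@sum2_eq _ a b (fun i j => (fn f i j)^-1)) (@sum2_eq _ a b (fun i j => (fn f i j)^-1)) !fn_inv_guard /Un.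
by rewrite addrA.
Qed.

Lemma ecov_file a b k (q p : elt a b) : ecov q p -> infile k p -> ~~ infile k q.
Proof.
case: q p => [q1 q2] [p1 p2]; rewrite /ecov /infile /=.
move: (ltn_ord q1) (ltn_ord p1) => ? ?; lia.
Qed.

Lemma foldr_toggle (R : realFieldType) a b (f : 'I_a * 'I_b -> R) k (s : seq (elt a b)) :
  uniq s -> all (infile k) s -> forall y,
  foldr (@toggle R a b) f s y = if y \in s then toggle y f y else f y.
Proof.
elim: s => [|x s IH] //= /andP[xs us] /andP[kx ks] y.
set g := foldr _ f s.
have IH' := IH us ks.
have gx : g x = f x by rewrite /g IH' (negbTE xs).
have eqn : forall q, ~~ infile k q -> g q = f q.
  move=> q hq; rewrite /g IH'; case: ifP => // qs.
  by move: hq; rewrite (allP ks q qs).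
rewrite inE /toggle; case: (eqVneq y x) => [->|yx] /=.
  rewrite gx eqxx; congr (_ * _ / _).
    apply: eq_bigr => -[c|q] //; rewrite covh_inr => hq /=.
    by apply: eqn; apply: ecov_file hq kx.
  apply: eq_bigr => -[c|q] //; rewrite covh_inr => hq /=.
  rewrite eqn //; case: q hq => [q1 q2]; case: x kx {xs gx} => [x1 x2].
  rewrite /ecov /infile /=; move: (ltn_ord q1) (ltn_ord x1) => ? ?; lia.
by rewrite /g IH'.
Qed.

Lemma prod_restrict (R : realFieldType) (F : nat -> R) l h N :
  (l <= h <= N)%N -> (forall s, (s < l)%N || (h <= s)%N -> F s = 1) ->
  \prod_(s < N) F s = \prod_(l <= s < h) F s.
Proof.
move=> /andP[lh hN] H1.
rewrite -(big_mkord xpredT) (big_cat_nat (leq0n l) (leq_trans lh hN)) /=.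
rewrite (big_cat_nat lh hN) /=.
rewrite [X in X * _]big_nat_cond big1 ?mul1r; last first.
  by move=> s /andP[/andP[_ hs] _]; apply: H1; rewrite hs.
rewrite [X in _ * X]big_nat_cond [X in _ * X]big1 ?mulr1 //.
by move=> s /andP[/andP[hs _] _]; apply: H1; rewrite hs orbT.
Qed.

Lemma prod_ord_eq (R : realFieldType) n (G : nat -> R) c :
  \prod_(j < n) (if (j == c :> nat) then G j else 1) = if (c < n)%N then G c else 1.
Proof.
elim: n => [|n IH]; first by rewrite big_ord0.
rewrite big_ord_recr /= IH.
case: (ltngtP c n) => h.
- have -> : (c < n.+1)%N by lia.
  by rewrite mulr1.
- have -> : (c < n.+1)%N = false by lia.
  by rewrite mulr1.
- by rewrite h ltnSn mul1r.
Qed.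

Definition vd a b k s : bool := [&& (k <= s)%N, (a <= s)%N, (s - k < a)%N & (s - a < b)%N].
Definition Wg (R : realFieldType) a b (g : nat -> nat -> R) k s : R :=
  if vd a b k s then g (s - k)%N (s - a)%N else 1.

Lemma prod_file (R : realFieldType) a b (g : nat -> nat -> R) k N : (k + a <= N)%N ->
  \prod_(x : elt a b | infile k x) g x.1 x.2 = \prod_(s < N) Wg a b g k s.
Proof.
move=> hN.
rewrite (@prod_restrict _ _ k (k + a)) ?leq_addr ?hN //; last first.
  by move=> s hs; rewrite /Wg /vd; case: ifP => //; lia.
rewrite -{2}(add0n k) big_addn addKn big_mkord.
rewrite big_mkcond.
have -> : \prod_(x : elt a b) (if infile k x then g x.1 x.2 else 1) =
  \prod_(i < a) \prod_(j < b) (if infile k (i, j) then g i j else 1).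
  by rewrite pair_bigA; apply: eq_bigr => -[].
apply: eq_bigr => i _.
rewrite (eq_bigr (fun j : 'I_b => if (a <= i + k)%N then (if (j == (i + k - a)%N :> nat) then g i j else 1) else 1)); last first.
  move=> j _; rewrite /infile /=; move: (ltn_ord i) (ltn_ord j) => ? ?.
  by do ![case: ifP => ?] => //; exfalso; lia.
rewrite /Wg /vd addnK.
move: (ltn_ord i) => ?.
case: (leqP a (i + k)) => h2.
  rewrite (@prod_ord_eq _ b (g i)).
  by do ![case: ifP => ?] => //; exfalso; lia.
rewrite big1 //; case: ifP => //; lia.
Qed.

Lemma dK (R : realFieldType) (x y : R) : y != 0 -> x / y * y = x.
Proof. by move=> hy; rewrite -mulrA mulVf ?mulr1. Qed.

Lemma telescope (R : realFieldType) (D U al be : nat -> R) l h :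
  (l < h)%N -> (forall s, 0 < al s) -> (forall s, 0 < be s) ->
  (forall s, (l.+1 < s < h.+1)%N -> D s = al s + be s.-1) ->
  (forall s, (l.+1 <= s)%N -> (s.+1 < h.+1)%N -> U s = (be s)^-1 + (al s.+1)^-1) ->
  D l.+1 = al l.+1 * be l ->
  U h = (be h * al h.+1)^-1 ->
  \prod_(l.+1 <= s < h.+1) (D s / U s)
  = \prod_(l.+1 <= s < h.+2) al s * \prod_(l <= s < h.+1) be s.
Proof.
move=> lh alp bep hD hU hDl hUh.
have Unz : forall s, (l.+1 <= s)%N -> (s < h.+1)%N -> U s != 0.
  move=> s h1 h2; case: (ltnP s.+1 h.+1) => h3.
    rewrite hU //; apply: lt0r_neq0; apply: addr_gt0; rewrite invr_gt0 //.
  have -> : s = h by lia.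
  by rewrite hUh invr_eq0 mulf_neq0 // lt0r_neq0.
have aux : forall m, (l.+1 + m.+1 <= h.+1)%N ->
    (\prod_(l.+1 <= s < (l.+1 + m).+1) (D s / U s)) * U (l.+1 + m)%N
    = D l.+1 * \prod_(l.+1 <= s < l.+1 + m) (al s.+1 * be s).
  elim=> [|m IH] hm.
    rewrite !addn0 big_nat1 big_geq // mulr1 dK // Unz //; lia.
  rewrite big_nat_recr /=; last lia.
  rewrite !addnS [in RHS]big_nat_recr /=; last lia.
  rewrite -mulrA dK; last by apply: Unz; lia.
  rewrite mulrA -IH; last lia.
  rewrite (hD (l.+1 + m).+1); last lia.
  rewrite (hU (l.+1 + m)%N); [|lia|lia].
  rewrite /=.
  have h1 := alp (l.+1 + m).+1; have h2 := bep (l.+1 + m)%N.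
  by field; rewrite !lt0r_neq0.
have := aux (h - l.+1)%N.
have -> : (l.+1 + (h - l.+1) = h)%N by lia.
move=> /(_ ltac:(lia)) e.
have Uhz : U h != 0 by apply: Unz; lia.
have -> : \prod_(l.+1 <= s < h.+1) (D s / U s) =
   D l.+1 * \prod_(l.+1 <= s < h) (al s.+1 * be s) / U h.
  by rewrite -e -mulrA mulfV // mulr1.
rewrite hDl hUh invrK big_split /=.
rewrite [in RHS](big_ltn (m := l.+1)); last lia.
rewrite [in RHS](big_add1 _ _ l.+1) /= [in RHS](big_nat_recr h); last lia.
rewrite [in RHS](big_ltn (m := l)); last lia.
rewrite [in RHS](big_nat_recr h (l.+1)) /=; last lia.
set A := \prod_(_ <= _ < _) al _.+1.
set B := \prod_(_ <= _ < _) be _.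
ring.
Qed.

Lemma fn_inv0 (R : realFieldType) a b (f : 'I_a * 'I_b -> R) i j :
  ~~ ((i < a) && (j < b))%N -> (fn f i j)^-1 = 0.
Proof. by move=> h; rewrite fn0 // invr0. Qed.

Lemma hD_lem (R : realFieldType) a b (f : 'I_a * 'I_b -> R) k s :
  (maxn k a < s)%N -> (s < minn (k + a) (a + b))%N ->
  Dn f (s - k) (s - a) = Wg a b (fn f) k.+1 s + Wg a b (fn f) k.-1 s.-1.
Proof.
rewrite /Dn /Wg /vd => h1 h2.
do ![case: ifP => ?]; rewrite ?add0r ?addr0; try (exfalso; lia).
all: congr (_ + _); congr (fn f _ _); lia.
Qed.

Lemma hU_lem (R : realFieldType) a b (f : 'I_a * 'I_b -> R) k s : (0 < k)%N ->
  (maxn k a <= s)%N -> (s.+1 < minn (k + a) (a + b))%N ->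
  Un f (s - k) (s - a) = (Wg a b (fn f) k.-1 s)^-1 + (Wg a b (fn f) k.+1 s.+1)^-1.
Proof.
rewrite /Un /Wg /vd => h0 h1 h2.
do ![case: ifP => ?]; rewrite ?add0r ?addr0; try (exfalso; lia).
all: congr (_^-1 + _^-1); congr (fn f _ _); lia.
Qed.

Lemma hDl_lem (R : realFieldType) a b (f : 'I_a * 'I_b -> R) k s : (0 < k)%N ->
  s = maxn k a -> (s < minn (k + a) (a + b))%N ->
  Dn f (s - k) (s - a) = Wg a b (fn f) k.+1 s * Wg a b (fn f) k.-1 s.-1.
Proof.
rewrite /Dn /Wg /vd => h0 h1 h2.
do ![case: ifP => ?]; rewrite ?add0r ?addr0 ?mulr1 ?mul1r; try (exfalso; lia).
all: try (congr (fn f _ _); lia).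
all: done.
Qed.

Lemma hUh_lem (R : realFieldType) a b (f : 'I_a * 'I_b -> R) k s : (0 < k)%N ->
  s = (minn (k + a) (a + b)).-1 -> (maxn k a <= s)%N ->
  Un f (s - k) (s - a) = (Wg a b (fn f) k.-1 s * Wg a b (fn f) k.+1 s.+1)^-1.
Proof.
rewrite /Un /Wg /vd => h0 h1 h2.
do ![case: ifP => ?]; rewrite ?add0r ?addr0 ?mulr1 ?mul1r; try (exfalso; lia).
all: try (congr (fn f _ _)^-1; lia).
- by rewrite !fn_inv0 ?addr0 ?invr1 //; lia.
- by rewrite [X in _ + X]fn_inv0 ?addr0; [congr (fn f _ _)^-1; lia | lia].
- by rewrite [X in X + _]fn_inv0 ?add0r; [congr (fn f _ _)^-1; lia | lia].
Qed.

Lemma Wg_pos (R : realFieldType) a b (f : 'I_a * 'I_b -> R) (hf : forall x, 0 < f x) k s :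
  0 < Wg a b (fn f) k s.
Proof.
rewrite /Wg /vd; case: ifP => [h|_]; last exact: ltr01.
apply: fn_gt0 => //; lia.
Qed.

Lemma pk_W (R : realFieldType) a b (f : 'I_a * 'I_b -> R) j : (j <= n a b)%N ->
  pk f j = \prod_(s < a + n a b) Wg a b (fn f) j s.
Proof.
move=> hj; rewrite /pk; case: ifP => hj2.
  rewrite -(@prod_file _ a b (fn f) j (a + n a b)); last by rewrite /n in hj *; lia.
  by apply: eq_bigr => -[x1 x2] _; rewrite fnE.
rewrite big1 // => s _; rewrite /Wg /vd; case: ifP => //; rewrite /n in hj hj2; lia.
Qed.

Lemma tau_eq (R : realFieldType) a b (f : 'I_a * 'I_b -> R) k y :
  tau_file k f y = if infile k y then toggle y f y else f y.
Proof.
rewrite /tau_file (@foldr_toggle _ _ _ _ k) ?enum_uniq ?mem_enum ?inE //.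
by apply/allP => x; rewrite mem_enum inE.
Qed.

Lemma pk_other (R : realFieldType) a b (f : 'I_a * 'I_b -> R) k j : j != k ->
  pk (tau_file k f) j = pk f j.
Proof.
move=> hjk; rewrite /pk; case: ifP => // _.
apply: eq_bigr => x hx; rewrite tau_eq ifF //.
by apply/negP => hk; move: hx hk hjk; rewrite /infile => /eqP -> /eqP ->; rewrite eqxx.
Qed.

Lemma key (R : realFieldType) a b (f : 'I_a * 'I_b -> R) (hf : forall x, 0 < f x) k :
  (0 < a)%N -> (0 < b)%N -> (0 < k)%N -> (k < n a b)%N ->
  pk (tau_file k f) k * pk f k = pk f k.-1 * pk f k.+1.
Proof.
move=> ha hb hk1 hk2.
rewrite [in LHS]/pk (ifT _ _ _); last by rewrite hk1 hk2.
rewrite (ifT _ _ _); last by rewrite hk1 hk2.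
rewrite -big_split /=.
rewrite (eq_bigr (fun x : elt a b => Dn f x.1 x.2 / Un f x.1 x.2)); last first.
  move=> x hx; rewrite tau_eq hx /toggle eqxx Dsum Usum.
  have := hf x; move: (f x) => fx hfx.
  rewrite mulrC !mulrA mulfV ?mul1r //; exact: lt0r_neq0.
rewrite (@prod_file _ a b (fun i j => Dn f i j / Un f i j) k (a + n a b)); last first.
  rewrite /n in hk2 *; lia.
rewrite /n in hk2.
rewrite (@prod_restrict _ _ (maxn k a) (minn (k + a) (a + b))); last first.
- by move=> s hs; rewrite /Wg /vd; case: ifP => //; lia.
- rewrite /n; lia.
rewrite (eq_big_nat _ _ (F2 := fun s => Dn f (s - k) (s - a) / Un f (s - k) (s - a))); last first.
  by move=> s hs; rewrite /Wg ifT //; rewrite /vd; lia.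
have [l el] : exists l, maxn k a = l.+1 by exists (maxn k a).-1; lia.
have [h eh] : exists h, minn (k + a) (a + b) = h.+1 by exists (minn (k + a) (a + b)).-1; lia.
rewrite el eh.
rewrite (@telescope _ (fun s => Dn f (s - k) (s - a)) (fun s => Un f (s - k) (s - a))
   (Wg a b (fn f) k.+1) (Wg a b (fn f) k.-1) l h); first last.
- apply: hUh_lem => //; lia.
- apply: (@hDl_lem _ a b f k l.+1) => //; lia.
- move=> s h1 h2; apply: hU_lem => //; lia.
- move=> s /andP[h1 h2]; apply: hD_lem; lia.
- by move=> s; apply: Wg_pos.
- by move=> s; apply: Wg_pos.
- lia.
rewrite mulrC (pk_W f (j := k.-1)) ?(pk_W f (j := k.+1)); try (rewrite /n; lia).
rewrite (@prod_restrict _ _ l h.+1); last first.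
- by move=> s hs; rewrite /Wg /vd; case: ifP => //; lia.
- rewrite /n; lia.
rewrite (@prod_restrict _ _ l.+1 h.+2) //.
- rewrite /n; lia.
- by move=> s hs; rewrite /Wg /vd; case: ifP => //; lia.
Qed.

Lemma pk_pos (R : realFieldType) a b (g : 'I_a * 'I_b -> R) (hg : forall x, 0 < g x) j :
  0 < pk g j.
Proof. rewrite /pk; case: ifP => _; last exact: ltr01. by apply: prodr_gt0 => x _. Qed.

Lemma nth_Q (R : realFieldType) a b (g : 'I_a * 'I_b -> R) i : (i < n a b)%N ->
  nth 0 (Qseq g) i = qk g i.+1.
Proof. by move=> hi; rewrite /Qseq (nth_map 0%N) ?size_iota // nth_iota // add1n. Qed.



Theorem lemma6 (R : realFieldType) (a b : nat) (ha : (1 <= a)%N) (hb : (1 <= b)%N)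
  (f : 'I_a * 'I_b -> R) (hf : forall x, 0 < f x)
  (k : nat) (hk1 : (1 <= k)%N) (hk2 : (k <= n a b - 1)%N) :
  Qseq (tau_file k f) = sigma 0 k (Qseq f).
Proof.
have hkn : (k < n a b)%N by rewrite /n in hk2 *; lia.
have hkey := key hf ha hb hk1 hkn.
have pos := pk_pos hf.
have szQ : forall g : 'I_a * 'I_b -> R, size (Qseq g) = n a b.
  by move=> g; rewrite /Qseq size_map size_iota.
apply: (@eq_from_nth _ 0).
  rewrite /sigma !size_cat size_takel ?size_drop !szQ /=; lia.
move=> i; rewrite szQ => hi.
rewrite nth_Q //.
have qo : forall j, j != k -> j.-1 != k -> qk (tau_file k f) j = qk f j.
  by move=> j h1 h2; rewrite /qk !pk_other.
rewrite /sigma nth_cat size_takel ?szQ; last lia.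
case: ltnP => h1.
  rewrite nth_take // nth_Q; last lia.
  by apply: qo; lia.
rewrite nth_cat /=.
case: ltnP => h2.
  have ePk : pk (tau_file k f) k = pk f k.-1 * pk f k.+1 / pk f k.
    by rewrite -hkey -mulrA mulfV ?mulr1 // lt0r_neq0.
  have p1 := pos k.-1; have p2 := pos k; have p3 := pos k.+1.
  have [e|e] : i = k.-1 \/ i = k by lia.
  - rewrite e subnn /= nth_Q // prednK // /qk.
    rewrite (pk_other f (k := k) (j := k.-1)); last lia.
    rewrite ePk; field; rewrite !lt0r_neq0 //.
  - rewrite e; have -> : (k - k.-1 = 1)%N by lia.
    rewrite /= nth_Q; last lia.
    rewrite prednK // /qk /= (pk_other f (k := k) (j := k.+1)); last lia.
    rewrite ePk; field; rewrite !lt0r_neq0 //.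
rewrite nth_drop nth_Q; last lia.
rewrite qo; [congr qk; lia| lia | lia].
Qed.
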